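(* Let $(A,E)$ be the direct producted $W^*$-probability space over $D_N$ of $W^*$-probability spaces $(A_1,\varphi_1),\dots,(A_N,\varphi_N)$. The element $x=(a_1,\dots,a_N)\in A$ is $D_N$-valued infinitely divisible if and only if all nonzero $a_j$ are infinitely divisible in $(A_j,\varphi_j)$, $j=1,\dots,N$.
   Context: Each $A_j$ is a von Neumann algebra and $\varphi_j$ a state with $\varphi_j(a^* )=\overline{\varphi_j(a)}$. $A=\times_{j=1}^N A_j$ with componentwise operations and adjoint; $D_N=\mathbb{C}^N$ with componentwise operations, identified with the central subalgebra $\{(\alpha_1 1,\dots,\alpha_N 1)\}$ of $A$; $E((a_1,\dots,a_N))=(\varphi_1(a_1),\dots,\varphi_N(a_N))$. $D_N$-valued cumulants: $k_n(y_1,\dots,y_n)=\sum_{\sigma\in NC(n)}\prod_{V\in\sigma}E(\prod_{l\in V}y_l)\,\mu(\sigma,1_n)$; freeness over $D_N$ means vanishing of mixed $D_N$-valued cumulants. $x\in A$ is $D_N$-valued infinitely divisible if for each $n\in\mathbb{N}$ there exist $x_{n,1},\dots,x_{n,n}\in A$ which are free from each other over $D_N$ and $D_N$-valued identically distributed, with $k_m(x,\dots,x)=\sum_{j=1}^n k_m(x_{n,j},\dots,x_{n,j})=n\,k_m(x_{n,j},\dots,x_{n,j})$ for all $m$. Infinite divisibility of $a\in(A_j,\varphi_j)$ is the analogous scalar notion (free, identically distributed $b_{n,1},\dots,b_{n,n}$ in $(A_j,\varphi_j)$ with $k^{(j)}_m(a,\dots,a)=n\,k^{(j)}_m(b_{n,l},\dots,b_{n,l})$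 for all $m$, for each $n$), where $k^{(j)}_m$ are the scalar cumulants of $\varphi_j$. *)

(* Defs.v *)
From HB Require Import structures.
From mathcomp Require Import all_boot all_order all_algebra.
From mathcomp Require Import complex reals.
Set Implicit Arguments. Unset Strict Implicit. Unset Printing Implicit Defensive.
Import Order.TTheory GRing.Theory Num.Theory.
Local Open Scope ring_scope.

Definition noncrossing n (P : {set {set 'I_n}}) : bool :=
  [forall V in P, forall W in P, (V != W) ==>
     ~~ [exists a : 'I_n, exists b : 'I_n, exists c : 'I_n, exists d : 'I_n,
          [&& (a < b)%N, (b < c)%N, (c < d)%N, a \in V, c \in V, b \in W & d \in W]]].

Definition isNC n (P : {set {set 'I_n}}) : bool :=
  partition P [set: 'I_n] && noncrossing P.

Definition refines n (P Q : {set {set 'I_n}}) : bool :=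
  [forall V in P, exists W in Q, V \subset W].

(* Moebius function mu(P, 1_n) of the lattice NC(n) (refinement order),
   computed by the defining recursion mu(1_n,1_n)=1,
   mu(P,1_n) = - sum_{P < Q <= 1_n} mu(Q,1_n), with fuel n
   (a non-crossing partition P is 1_n iff it has at most one block). *)
Fixpoint mu_aux n (k : nat) (P : {set {set 'I_n}}) : int :=
  if (#|P| <= 1)%N then 1 else
  match k with
  | 0 => 0
  | k'.+1 => - \sum_(Q : {set {set 'I_n}} | [&& isNC Q, refines P Q & Q != P])
                 mu_aux k' Q
  end.

Definition mobius_top n (P : {set {set 'I_n}}) : int := mu_aux n P.

(* k_n(y_1..y_n) = sum_{sigma in NC(n)} prod_{V in sigma} f(prod_{l in V} y_l) mu(sigma,1_n),
   products inside blocks taken in increasing order of indices *)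
Definition cumulant (C : numFieldType) (B : nzRingType) (f : B -> C) n
  (y : 'I_n -> B) : C :=
  \sum_(P : {set {set 'I_n}} | isNC P)
     (\prod_(V in P) f (\prod_(l in V) y l)) * (mobius_top P)%:~R.

(* Elements of A = A_1 x ... x A_N are dependent tuples  forall j, A j ;
   operations are componentwise.  D_N-values are tuples 'I_N -> C,
   and E((a_j)_j) = (phi_j(a_j))_j. *)
Section DN.
Variables (C : numFieldType) (N : nat) (A : 'I_N -> algType C)
          (phi : forall j, A j -> C).

Definition prodA := forall j, A j.

Definition condE (x : prodA) : 'I_N -> C := fun j => phi (x j).

Definition dcumulant n (y : 'I_n -> prodA) : 'I_N -> C :=
  fun j => \sum_(P : {set {set 'I_n}} | isNC P)
     (\prod_(V in P) condE (fun i => \prod_(l in V) y l i) j)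
        * (mobius_top P)%:~R.

Definition DN_free n (xs : 'I_n -> prodA) : Prop :=
  forall m (i : 'I_m -> 'I_n), (exists l1 l2, i l1 != i l2) ->
    forall j, dcumulant (fun l => xs (i l)) j = 0.

(* D_N-valued identical distribution: all D_N-valued moments
   E(x d_1 x d_2 ... x d_m), d_l in D_N (embedded as (d_l(j) 1)_j), agree *)
Definition DN_ident n (xs : 'I_n -> prodA) : Prop :=
  forall (l1 l2 : 'I_n) m (d : 'I_m -> 'I_N -> C) (j : 'I_N),
    condE (fun i => \prod_(l < m) (xs l1 i * (d l i)%:A)) j =
    condE (fun i => \prod_(l < m) (xs l2 i * (d l i)%:A)) j.

Definition DN_inf_div (x : prodA) : Prop :=
  forall n, (0 < n)%N -> exists xs : 'I_n -> prodA,
    [/\ DN_free xs, DN_ident xs &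
        forall m, (0 < m)%N -> forall j,
          dcumulant (fun _ : 'I_m => x) j
            = \sum_(l < n) dcumulant (fun _ : 'I_m => xs l) j
          /\ forall l, dcumulant (fun _ : 'I_m => x) j
                       = n%:R * dcumulant (fun _ : 'I_m => xs l) j].
End DN.

Definition scal_free (C : numFieldType) (B : nzRingType) (f : B -> C) n
  (bs : 'I_n -> B) : Prop :=
  forall m (i : 'I_m -> 'I_n), (exists l1 l2, i l1 != i l2) ->
    cumulant f (fun l => bs (i l)) = 0.

Definition scal_ident (C : numFieldType) (B : nzRingType) (f : B -> C) n
  (bs : 'I_n -> B) : Prop :=
  forall (l1 l2 : 'I_n) m, f (bs l1 ^+ m) = f (bs l2 ^+ m).

Definition inf_div (C : numFieldType) (B : nzRingType) (f : B -> C) (a : B) : Prop :=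
  forall n, (0 < n)%N -> exists bs : 'I_n -> B,
    [/\ scal_free f bs, scal_ident f bs &
        forall m, (0 < m)%N -> forall l,
          cumulant f (fun _ : 'I_m => a) = n%:R * cumulant f (fun _ : 'I_m => bs l)].

Definition is_involution (R : rcfType) (B : algType R[i]) (s : B -> B) : Prop :=
  [/\ forall a, s (s a) = a,
      forall a b, s (a + b) = s a + s b,
      forall (c : R[i]) a, s (c *: a) = (c^*)%C *: s a,
      forall a b, s (a * b) = s b * s a & s 1 = 1].

Definition is_state (R : rcfType) (B : algType R[i]) (s : B -> B) (f : B -> R[i]) : Prop :=
  [/\ forall (c : R[i]) a b, f (c *: a + b) = c * f a + f b,
      f 1 = 1,
      forall a, f (s a) = (f a)^*%C &
      forall a, 0 <= f (s a * a)].

(* Main.v *)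
Require Import Defs.
From HB Require Import structures.
From mathcomp Require Import all_boot all_order all_algebra.
From mathcomp Require Import complex reals.
From Stdlib Require ClassicalEpsilon.
Import Order.TTheory GRing.Theory Num.Theory.
Local Open Scope ring_scope.

Lemma cumulant0 (C : numFieldType) (B : nzRingType) (f : B -> C) m :
  f 0 = 0 -> (0 < m)%N -> cumulant f (fun _ : 'I_m => 0) = 0.
Proof.
move=> f0 m0; apply: big1 => P /andP[/and3P[/eqP cov _ n0] _].
pose x : 'I_m := Ordinal m0.
have : x \in cover P by rewrite cov inE.
case/bigcupP=> V VP xV.
rewrite (bigD1 V VP) /= prodr_const expr0n.
have -> : (#|V| == 0)%N = false by apply/negbTE; rewrite -lt0n; apply/card_gt0P; exists x.
by rewrite f0 !mul0r.
Qed.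

Lemma prod_scal (C : comNzRingType) (B : algType C) (x : B) m (c : 'I_m -> C) :
  \prod_(l < m) (x * (c l)%:A) = (\prod_(l < m) c l) *: x ^+ m.
Proof.
elim: m c => [|m IH] c; first by rewrite !big_ord0 scale1r expr0.
rewrite !big_ord_recr /= IH mulr_algr -scalerAl -scalerAr scalerA -exprSr.
by [].
Qed.

Theorem mainTheorem15 (R : realType) (N : nat) (A : 'I_N -> algType R[i])
  (star : forall j, A j -> A j) (phi : forall j, A j -> R[i])
  (Hstar : forall j, is_involution (@star j))
  (Hphi : forall j, is_state (@star j) (@phi j))
  (a : forall j, A j) :
  DN_inf_div phi a <-> (forall j, a j != 0 -> inf_div (@phi j) (a j)).
Proof.
have phi0 : forall j, phi j 0 = 0.
  move=> j; case: (Hphi j) => lin _ _ _.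
  have := lin 1 0 0; rewrite scale1r addr0 mul1r.
  by move=> /(congr1 (fun z => z - phi j 0)); rewrite subrr addrK => <-.
have phiZ : forall j c x, phi j (c *: x) = c * phi j x.
  move=> j c x; case: (Hphi j) => lin _ _ _.
  by have := lin c x 0; rewrite addr0 phi0 addr0.
split.
- move=> H j aj0 n n0.
  have [xs [Hfree Hident Hcum]] := H n n0.
  exists (fun l => xs l j); split.
  + move=> m i Hi; exact: (Hfree m i Hi j).
  + move=> l1 l2 m.
    have := Hident l1 l2 m (fun _ _ => 1) j.
    rewrite /condE !prod_scal.
    by rewrite !big1 // !scale1r.
  + move=> m m0 l; have [_ E] := Hcum m m0 j; exact: (E l).
- move=> H n n0.
  pose P j (bs : 'I_n -> A j) :=
    [/\ scal_free (@phi j) bs, scal_ident (@phi j) bs &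
        forall m, (0 < m)%N -> forall l,
          cumulant (@phi j) (fun _ : 'I_m => a j) =
            n%:R * cumulant (@phi j) (fun _ : 'I_m => bs l)].
  have Hb : forall j, exists bs, P j bs.
    move=> j; have [/eqP aj0|ajn0] := boolP (a j == 0).
      exists (fun _ => 0); split.
      * move=> m i [l1 _]; apply: cumulant0 => //.
        by case: m i l1 => [|m] i [].
      * by [].
      * by move=> m m0 l; rewrite aj0 cumulant0 ?mulr0.
    exact: (H j ajn0 n n0).
  pose bsf j := proj1_sig (ClassicalEpsilon.constructive_indefinite_description _ (Hb j)).
  have Pb : forall j, P j (bsf j) := fun j =>
    proj2_sig (ClassicalEpsilon.constructive_indefinite_description _ (Hb j)).
  exists (fun l j => bsf j l); split.
  + move=> m i Hi j; case: (Pb j) => Hf _ _; exact: (Hf m i Hi).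
  + move=> l1 l2 m d j; rewrite /condE !prod_scal !phiZ.
    case: (Pb j) => _ Hi _; by rewrite (Hi l1 l2 m).
  + move=> m m0 j; case: (Pb j) => _ _ Hc.
    have n0' : (n%:R : R[i]) != 0 by rewrite pnatr_eq0 -lt0n.
    split; last exact: Hc m m0.
    have E : forall l, cumulant (@phi j) (fun _ : 'I_m => bsf j l)
        = cumulant (@phi j) (fun _ : 'I_m => a j) / n%:R.
      by move=> l; rewrite (Hc m m0 l) mulrAC mulfV // mul1r.
    have K : forall c : R[i], c / n%:R *+ n = c by move=> c; rewrite -mulr_natr mulfVK.
    have G : cumulant (@phi j) (fun _ : 'I_m => a j)
       = \sum_(l < n) cumulant (@phi j) (fun _ : 'I_m => bsf j l).
      by rewrite (eq_bigr _ (fun l _ => E l)) sumr_const card_ord K.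
    exact: G.
Qed.
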